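(* $\displaystyle\lim_{n\to\infty}\frac{l(4n+2)}{l(4n+1)}=\frac{17}{5}.$
   Context: For $n\ge 0$, $c(n)=\sum_{i=0}^{n}\left(\binom{n}{i}\bmod 2\right)2^{i}$, the integer whose binary digits form the $n$-th row of Pascal's triangle modulo $2$; one has $c(2n)\equiv1\pmod4$, and $l(n)=\frac{c(2n)-1}{4}$. (Stated in the paper as a conjecture of R. Stephan and proved there.) *)

(* Defs.v *)
From mathcomp Require Import all_boot all_order all_algebra.
From mathcomp Require Import all_classical all_reals all_analysis.
Set Implicit Arguments. Unset Strict Implicit. Unset Printing Implicit Defensive.

Definition c (n : nat) : nat := \sum_(i < n.+1) ('C(n, i) %% 2) * 2 ^ i.

(* l(n) = (c(2n) - 1) / 4  (exact, since c(2n) = 1 mod 4) *)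
Definition l (n : nat) : nat := (c (2 * n) - 1) %/ 4.

(* Main.v *)
Require Import Defs.
From mathcomp Require Import all_boot all_order all_algebra.
From mathcomp Require Import all_classical all_reals all_analysis.
From mathcomp Require Import zify ring lra.

Lemma bin_par m : forall i, odd 'C(m.*2, i.*2) = odd 'C(m, i) /\ ~~ odd 'C(m.*2, i.*2.+1).
Proof.
elim: m => [|m IH] i.
  by case: i.
case: i => [|i].
  by rewrite bin0 bin1 /= odd_double.
have E : forall k, 'C(m.*2.+2, k.+2) = 'C(m.*2, k.+2) + ('C(m.*2, k.+1) + 'C(m.*2, k.+1)) + 'C(m.*2, k).
  move=> k; rewrite !binS; lia.
have [A1 B1] := IH i; have [A2 B2] := IH i.+1.
rewrite !doubleS in B2 A2 *.
split.
  rewrite [in RHS]binS [in RHS]oddD -A1 -A2 E addnn !oddD odd_double addbF.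
  by [].
rewrite -[X in 'C(_, X)]/((i.*2.+1).+2) E addnn !oddD odd_double.
move: B1 B2; by do 2 case: (odd _).
Qed.

Lemma bin_even m k : odd 'C(m.*2, k) = ~~ odd k && odd 'C(m, k./2).
Proof.
rewrite -[k in 'C(_, k)](odd_double_half k).
have [A B] := bin_par m k./2.
by case: (odd k) => /=; rewrite ?add0n ?add1n //; apply/negbTE.
Qed.

Lemma bin_odd m k : odd 'C(m.*2.+1, k) = odd 'C(m, k./2).
Proof.
case: k => [|k]; first by rewrite !bin0.
rewrite binS oddD !bin_even /=.
case Hk: (odd k) => /=; first by rewrite addbF.
by rewrite uphalf_half Hk.
Qed.

Definition sb b n N := \sum_(i < N) ('C(n,i) %% 2) * b ^ i.

Lemma sb_ext b n N : n < N -> sb b n N = sb b n n.+1.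
Proof.
elim: N => // N IH; rewrite ltnS leq_eqVlt; case/orP => [/eqP-> // | lt].
by rewrite /sb big_ord_recr /= -/(sb b n N) IH // bin_small // addn0.
Qed.

Lemma pair_sum (F : nat -> nat) N : \sum_(i < N.*2) F i = \sum_(i<N) (F i.*2 + F i.*2.+1).
Proof.
elim: N => [|N IH]; first by rewrite !big_ord0.
by rewrite doubleS !big_ord_recr /= IH addnA.
Qed.

Lemma cb_even b m : sb b (m.*2) (m.*2.+1) = sb (b*b) m m.+1.
Proof.
rewrite -(@sb_ext b m.*2 (m.+1).*2); last by rewrite doubleS.
rewrite /sb (pair_sum (fun i => 'C(m.*2, i) %% 2 * b ^ i)); apply: eq_bigr => i _.
rewrite !modn2 !bin_even /= odd_double /= half_double addn0 -mul2n expnM.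
by [].
Qed.

Lemma cb_odd b m : sb b (m.*2.+1) (m.*2.+2) = (1 + b) * sb (b*b) m m.+1.
Proof.
have -> : m.*2.+2 = (m.+1).*2 by rewrite doubleS.
rewrite /sb.
rewrite (pair_sum (fun i => 'C(m.*2.+1, i) %% 2 * b ^ i)) big_distrr; apply: eq_bigr => i _.
rewrite !modn2 !bin_odd.
have h : forall k, (k.*2.+1)./2 = k by elim => //= k ->.
rewrite h half_double expnS -mul2n expnM /=.
set x := odd _; set y := (b ^ 2) ^ i.
rewrite -/y; nia.
Qed.

Lemma sb_split b n : sb b n n.+1 = 1 + b * \sum_(i < n) ('C(n, i.+1) %% 2) * b ^ i.
Proof.
rewrite /sb big_ord_recl /= bin0 mul1n big_distrr /=; congr (_ + _).
by apply: eq_bigr => i _; rewrite /bump /= expnS; nia.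
Qed.

Lemma sb_ge b n : b ^ n <= sb b n n.+1.
Proof. by rewrite /sb big_ord_recr /= binn mul1n leq_addl. Qed.

Lemma cE k : c k = sb 2 k k.+1.
Proof. by []. Qed.

Lemma key n : exists D, l (4*n+2) = 4 + 1088*D /\ l (4*n+1) = 1 + 320*D /\ n <= 256*D.
Proof.
have e2 : 2 * (4 * n + 2) = (((n.*2).+1).*2).*2 by rewrite -!mul2n; lia.
have e1 : 2 * (4 * n + 1) = (((n.*2).*2).+1).*2 by rewrite -!mul2n; lia.
have c2 : c (2 * (4 * n + 2)) = 17 * sb 256 n n.+1.
  by rewrite e2 cE cb_even cb_even cb_odd.
have c1 : c (2 * (4 * n + 1)) = 5 * sb 256 n n.+1.
  by rewrite e1 cE cb_even cb_odd cb_even.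
exists (\sum_(i < n) ('C(n, i.+1) %% 2) * 256 ^ i).
rewrite /l c2 c1 sb_split.
set D := \sum_(_ < _) _.
have g := sb_ge 256 n; rewrite sb_split -/D in g.
have g2 : n < 256 ^ n by apply: ltn_expl.
split; [|split]; last by lia.
  have -> : 17 * (1 + 256 * D) - 1 = (4 + 1088 * D) * 4 by lia.
  by rewrite mulnK.
have -> : 5 * (1 + 256 * D) - 1 = (1 + 320 * D) * 4 by lia.
by rewrite mulnK.
Qed.

Import Order.TTheory GRing.Theory Num.Theory.
Import numFieldNormedType.Exports.
Local Open Scope classical_set_scope.
Local Open Scope ring_scope.

Theorem mainTheorem11 (R : realType) :
  (fun n : nat => ((l (4 * n + 2))%:R / (l (4 * n + 1))%:R : R)) @ \oo
    --> (17%:R / 5%:R : R).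
Proof.
apply: (@squeeze_cvgr _ _ _ R (fun=> 17%:R/5%:R) (fun n => 17%:R/5%:R + harmonic n)); last first.
- rewrite -[X in _ --> X]addr0; apply: cvgD; first exact: cvg_cst.
  exact: cvg_harmonic.
- exact: cvg_cst.
apply: nearW => n /=.
have [D [h1 [h2 h3]]] := key n.
rewrite h1 h2.
have E1 : ((4 + 1088 * D)%:R : R) = 4 + 1088 * D%:R by rewrite (natrD R 4) (natrM R 1088).
have E2 : ((1 + 320 * D)%:R : R) = 1 + 320 * D%:R by rewrite (natrD R 1) (natrM R 320).
rewrite E1 E2.
have h3' : (n%:R : R) <= 256 * D%:R by rewrite -(natrM R 256 D) ler_nat.
have x0 : (0 : R) <= D%:R by apply: ler0n.
have y0 : (0 : R) <= n%:R by apply: ler0n.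
rewrite -[n.+1%:R]natr1.
move: h3' x0 y0; set x := (D%:R : R); set y := (n%:R : R).
clearbody x y => h3' x0 y0.
have p : (0 : R) < 1 + 320 * x by lra.
clear h1 h2 h3 E1 E2.
have e : ((4 + 1088 * x) / (1 + 320 * x) : R) = 17 / 5 + 3 / (5 * (1 + 320 * x)).
  by field; lra.
rewrite e; apply/andP; split.
  by rewrite lerDl divr_ge0 //; lra.
rewrite lerD2l ler_pdivrMr; last by lra.
rewrite mulrC -[X in _ <= X]/(5 * (1 + 320 * x) / (y + 1)) ler_pdivlMr; last by lra.
lra.
Qed.
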